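(* Let $d,r$ be positive integers, let $n=dr$, and let $\alpha\in\mathcal S_n$ have cycle structure $d^r$ (i.e. $r$ disjoint cycles each of length $d$). Then $(\alpha,\alpha,\alpha;(12))\in\mathrm{Par}(n)$ if and only if $d\not\equiv2\pmod 4$.
   Context: A Latin square of order $n$ is an $n\times n$ array with rows, columns and symbols indexed by $[n]$, each symbol occurring once in each row and each column, with triple set $O(L)$. Permutations act on the right. A paratopism $(\alpha,\beta,\gamma;(12))$ maps $L$ to $L^\sigma$ with triple set $\{(y\beta,x\alpha,z\gamma):(x,y,z)\in O(L)\}$; it is an autoparatopism of $L$ if $L^\sigma=L$. $\mathrm{Par}(n)$ is the set of paratopisms that are autoparatopisms of at least one Latin square of order $n$. *)

(* Defs.v *)
From mathcomp Require Import all_boot all_fingroup.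
Set Implicit Arguments. Unset Strict Implicit. Unset Printing Implicit Defensive.

(* A Latin square of order n: L x y is the symbol in row x, column y,
   i.e. O(L) = {(x, y, L x y)}.  Each symbol occurs exactly once in each
   row and exactly once in each column. *)
Definition latin_square (n : nat) (L : 'I_n -> 'I_n -> 'I_n) : Prop :=
  (forall x z : 'I_n, exists! y : 'I_n, L x y = z) /\
  (forall y z : 'I_n, exists! x : 'I_n, L x y = z).

(* The paratopism (a, b, c; (12)) maps L to L^s with triple set
   {(y b, x a, z c) : (x,y,z) in O(L)}.  Permutations act on the right, so
   "x a" is the image a x.  L^s is again a function of (row, col); it equals
   L iff every image triple (b y, a x, c (L x y)) belongs to O(L). *)
Definition autoparatopism12 (n : nat) (a b c : {perm 'I_n})
    (L : 'I_n -> 'I_n -> 'I_n) : Prop :=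
  forall x y : 'I_n, L (b y) (a x) = c (L x y).

Definition in_Par12 (n : nat) (a b c : {perm 'I_n}) : Prop :=
  exists L : 'I_n -> 'I_n -> 'I_n, latin_square L /\ autoparatopism12 a b c L.

Definition cycle_structure_uniform (m d : nat) (a : {perm 'I_m}) : Prop :=
  forall x : 'I_m, #|porbit a x| = d.

(* Main.v *)
Require Import Defs.
From mathcomp Require Import all_boot all_fingroup.
From mathcomp Require Import zify.
Set Implicit Arguments. Unset Strict Implicit. Unset Printing Implicit Defensive.


Definition addm (d a b : nat) := if a + b < d then a + b else a + b - d.
Definition subm (d a b : nat) := if b <= a then a - b else a + d - b.

Lemma latin_of_inj n (L : 'I_n -> 'I_n -> 'I_n) :
  (forall x, injective (L x)) -> (forall y, injective (L^~ y)) -> latin_square L.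
Proof.
move=> H1 H2; split.
- move=> x z; have [g gK Kg] := injF_bij (H1 x).
  by exists (g z); split; [exact: Kg | move=> y <-; rewrite gK].
- move=> y z; have [g gK Kg] := injF_bij (H2 y).
  by exists (g z); split; [exact: Kg | move=> x <-; rewrite gK].
Qed.

Lemma succ_lt d a : a < d -> addm d a 1 < d.
Proof. rewrite /addm; case: ifP; lia. Qed.

Definition osucc d (x : 'I_d) : 'I_d := Ordinal (succ_lt (ltn_ord x)).

Section Coords.
Variables (n d : nat) (a : {perm 'I_n}) (ha : forall x, #|porbit a x| = d) (x0 : 'I_n).

Lemma d_gt0 : 0 < d.
Proof. by rewrite -(ha x0) lt0n card_porbit_neq0. Qed.

Lemma iter_d z : iter d a z = z.
Proof. by rewrite -{1}(ha z) iter_porbit. Qed.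

Lemma iter_muld q z : iter (q * d) a z = z.
Proof. by elim: q => [//|q IH]; rewrite mulSn iterD IH iter_d. Qed.

Lemma iter_inj z i j : i < d -> j < d -> iter i a z = iter j a z -> i = j.
Proof.
move=> hi hj e; have U := uniq_traject_porbit a z; rewrite ha in U.
have := nth_uniq z _ _ U; rewrite size_traject => /(_ i j hi hj).
by rewrite !nth_traject // e eqxx => /esym/eqP.
Qed.

Lemma porbit_iter z i : porbit a (iter i a z) = porbit a z.
Proof. by rewrite -permX porbit_perm. Qed.

Lemma in_porbit_iter z y : y \in porbit a z -> exists2 i, i < d & y = iter i a z.
Proof.
case/porbitP=> i ->; exists (i %% d); first by rewrite ltn_pmod // d_gt0.
by rewrite permX {1}(divn_eq i d) iterD iter_muld.
Qed.

Definition rep (O : {set 'I_n}) := odflt x0 [pick y in O].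

Lemma porbit_rep O : O \in porbits a -> porbit a (rep O) = O.
Proof.
rewrite /porbits => /imsetP[x _ ->]; rewrite /rep; case: pickP => [y Hy|H] /=.
  by apply/eqP; rewrite eq_porbit_mem.
by have := H x; rewrite porbit_id.
Qed.

Definition ce (p : 'I_d * 'I_#|porbits a|) : 'I_n := iter p.1 a (rep (enum_val p.2)).

Lemma ce_inj : injective ce.
Proof.
move=> [i j] [i' j'] e; rewrite /ce /= in e.
have ej : j = j'.
  apply: enum_val_inj; rewrite -(porbit_rep (enum_valP j)) -(porbit_rep (enum_valP j')).
  by rewrite -(porbit_iter _ i) e porbit_iter.
subst j'; congr pair; apply: val_inj; exact: iter_inj e.
Qed.

Lemma ce_surj u : u \in codom ce.
Proof.
apply/codomP; have PO : porbit a u \in porbits a by rewrite /porbits; apply: imset_f.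
have : u \in porbit a (rep (porbit a u)).
  by rewrite porbit_sym -{2}(porbit_rep PO) porbit_id.
case/in_porbit_iter => i hi ->.
exists (Ordinal hi, enum_rank_in PO (porbit a u)); rewrite /ce /= enum_rankK_in //.
Qed.

Definition ceinv u := iinv (ce_surj u).

Lemma ceK : cancel ce ceinv.
Proof. by move=> p; apply: ce_inj; rewrite /ceinv f_iinv. Qed.
Lemma ceinvK : cancel ceinv ce.
Proof. by move=> u; rewrite /ceinv f_iinv. Qed.

Lemma ce_succ p : a (ce p) = ce (osucc p.1, p.2).
Proof.
case: p => i j; rewrite /ce /=; set z := rep _; rewrite /addm -iterS.
have := ltn_ord i; case: ifPn => h hl; first by rewrite addn1.
have -> : i + 1 - d = 0 by lia.
have -> : (nat_of_ord i).+1 = d by lia.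
exact: iter_d.
Qed.
End Coords.

Definition F0 (m s : nat) :=
  if s < m then (if odd s then 2*s+1 else (if s == 0 then 0 else 2*m - s))
  else (if odd s then 2*m + 1 - s else 2*s + 1 - 2*m).
Definition F1 (m s : nat) :=
  if odd s then (if s < m then 2*s else 2*m - s)
  else (if s == 0 then 0 else if s <= m then 2*m + 1 - s else 2*s - 2*m).
Definition FF (m : nat) (e : bool) s := if e then F1 m s else F0 m s.

Ltac spl := repeat match goal with
 | |- context [if ?b then _ else _] =>
    lazymatch b with context [if _ then _ else _] => fail | _ => idtac end;
    let h := fresh "h" in case: (boolP b) => h; cbv beta iota
 end.

Ltac splitif := repeat match goal with
  | |- context [if ?b then _ else _] => case: (boolP b) => ?
  | H : context [if ?b then _ else _] |- _ => move: H; case: (boolP b) => ? ?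
  end.

Section B.
Variables (k : nat) (hk : 0 < k).
Let m := 2 * k.
Let d := 4 * k.

Lemma FF_lt e s : s < d -> FF m e s < d.
Proof. rewrite /FF /F0 /F1 /m /d; case: e; splitif; lia. Qed.

Lemma FF_inj e s1 s2 : s1 < d -> s2 < d -> FF m e s1 = FF m e s2 -> s1 = s2.
Proof. rewrite /FF /F0 /F1 /m /d; case: e; splitif; lia. Qed.

Lemma FF_col p s1 s2 : s1 < d -> s2 < d ->
  subm d (FF m (p (+) odd s1) s1) s1 = subm d (FF m (p (+) odd s2) s2) s2 -> s1 = s2.
Proof.
rewrite /subm /FF /F0 /F1 /m /d => h1 h2.
case: p; case: (boolP (odd s1)) => o1; case: (boolP (odd s2)) => o2 /=; spl; lia.
Qed.

Lemma FF_tau e s : s < d ->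
  FF m (~~ (e (+) odd s)) (subm d 0 s) = subm d (FF m e s) s.
Proof.
rewrite /subm /FF /F0 /F1 /m /d => h1.
case: e; case: (boolP (odd s)) => o1 /=; spl; lia.
Qed.
End B.

Lemma addm_lt d a b : a < d -> b < d -> addm d a b < d.
Proof. rewrite /addm; case: ifPn; lia. Qed.
Lemma subm_lt d a b : a < d -> b < d -> subm d a b < d.
Proof. rewrite /subm; case: ifPn; lia. Qed.
Lemma addm_injr d a b1 b2 : a < d -> b1 < d -> b2 < d -> addm d a b1 = addm d a b2 -> b1 = b2.
Proof. rewrite /addm; case: ifPn; case: ifPn; lia. Qed.
Lemma subm_injl d a b1 b2 : a < d -> b1 < d -> b2 < d -> subm d b1 a = subm d b2 a -> b1 = b2.
Proof. rewrite /subm; case: ifPn; case: ifPn; lia. Qed.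
Lemma addmC d a b : addm d a b = addm d b a.
Proof. by rewrite /addm addnC. Qed.
Lemma col_rewrite d x y f : x < d -> y < d -> f < d ->
  addm d x f = addm d y (subm d f (subm d y x)).
Proof. rewrite /addm /subm => *; repeat case: ifPn; lia. Qed.
Lemma sub_sub d x y : x < d -> y < d -> subm d y (subm d y x) = x.
Proof. rewrite /subm => *; repeat case: ifPn; lia. Qed.
Lemma tau_arith d x y f : x < d -> y < d -> f < d ->
  addm d (addm d y 1) (subm d f (subm d y x)) = addm d (addm d x f) 1.
Proof. rewrite /addm /subm => *; repeat case: ifPn; lia. Qed.
Lemma tau_sub d x y : x < d -> y < d ->
  subm d (addm d x 1) (addm d y 1) = subm d 0 (subm d y x).
Proof. rewrite /addm /subm => *; repeat case: ifPn; lia. Qed.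
Lemma odd_sub k x y : x < 4 * k -> y < 4 * k ->
  odd x = odd y (+) odd (subm (4 * k) y x).
Proof.
rewrite /subm => *; case: ifPn => ?;
  case: (boolP (odd x)) => ?; case: (boolP (odd y)) => ?; case: (boolP (odd _)) => ? //=; lia.
Qed.
Lemma odd_succ k y : y < 4 * k -> odd (addm (4 * k) y 1) = ~~ odd y.
Proof.
rewrite /addm => *; case: ifPn => ?;
  case: (boolP (odd y)) => ?; case: (boolP (odd _)) => ? //=; lia.
Qed.

Definition base_ok d (N : 'I_d -> 'I_d -> 'I_d) :=
  [/\ forall x, injective (N x), forall y, injective (N^~ y) &
      forall x y, N (osucc y) (osucc x) = osucc (N x y)].

Section Four.
Variables (k : nat) (hk : 0 < k).

Lemma N4_lt (x y : 'I_(4 * k)) :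
  addm (4 * k) x (FF (2 * k) (odd x) (subm (4 * k) y x)) < 4 * k.
Proof. by apply: addm_lt => //; apply: (FF_lt hk); apply: subm_lt. Qed.

Definition N4 (x y : 'I_(4 * k)) : 'I_(4 * k) := Ordinal (N4_lt x y).

Lemma N4_ok : base_ok N4.
Proof.
split.
- move=> x y1 y2 /(congr1 val) /=.
  have hx := ltn_ord x; have h1 := ltn_ord y1; have h2 := ltn_ord y2.
  move/(addm_injr hx (FF_lt hk _ (subm_lt h1 hx)) (FF_lt hk _ (subm_lt h2 hx))).
  move/(FF_inj hk (subm_lt h1 hx) (subm_lt h2 hx)).
  by move/(subm_injl hx h1 h2) => /val_inj.
- move=> y x1 x2 /(congr1 val) /=.
  have hy := ltn_ord y; have h1 := ltn_ord x1; have h2 := ltn_ord x2.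
  rewrite (col_rewrite h1 hy (FF_lt hk _ (subm_lt hy h1))).
  rewrite (col_rewrite h2 hy (FF_lt hk _ (subm_lt hy h2))).
  rewrite (odd_sub h1 hy) (odd_sub h2 hy).
  move/(addm_injr hy (subm_lt (FF_lt hk _ (subm_lt hy h1)) (subm_lt hy h1))
                     (subm_lt (FF_lt hk _ (subm_lt hy h2)) (subm_lt hy h2))).
  move/(FF_col hk (subm_lt hy h1) (subm_lt hy h2)) => e.
  by apply: ord_inj; rewrite -(sub_sub h1 hy) e sub_sub.
- move=> x y; apply: val_inj => /=.
  have hx := ltn_ord x; have hy := ltn_ord y.
  have oy : odd y = odd x (+) odd (subm (4 * k) y x).
    by rewrite (odd_sub hx hy) -addbA addbb addbF.
  rewrite tau_sub // odd_succ // oy (FF_tau hk) ?subm_lt //.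
  by rewrite tau_arith // (FF_lt hk) // subm_lt.
Qed.
End Four.

Definition half d w := if odd w then (w + d) %/ 2 else w %/ 2.

Section Odd.
Variables (d : nat) (hd : odd d).
Lemma half_lt w : w < d -> half d w < d.
Proof. rewrite /half; case: ifPn; lia. Qed.
Lemma half_inj w1 w2 : w1 < d -> w2 < d -> half d w1 = half d w2 -> w1 = w2.
Proof. rewrite /half; case: ifPn; case: ifPn; lia. Qed.
Lemma half_step w : w < d -> half d (addm d (addm d w 1) 1) = addm d (half d w) 1.
Proof. rewrite /half /addm => ?; spl; lia. Qed.
Lemma addm_11 x y : x < d -> y < d ->
  addm d (addm d y 1) (addm d x 1) = addm d (addm d (addm d x y) 1) 1.
Proof. rewrite /addm => *; spl; lia. Qed.
Lemma half_tau x y : x < d -> y < d ->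
  half d (addm d (addm d y 1) (addm d x 1)) = addm d (half d (addm d x y)) 1.
Proof. by move=> hx hy; rewrite addm_11 // half_step // addm_lt. Qed.

Definition Nodd (x y : 'I_d) : 'I_d :=
  Ordinal (half_lt (addm_lt (ltn_ord x) (ltn_ord y))).

Lemma Nodd_ok : base_ok Nodd.
Proof.
have rowi x y1 y2 : Nodd x y1 = Nodd x y2 -> y1 = y2.
  move/(congr1 val) => /=; have hx := ltn_ord x; have h1 := ltn_ord y1; have h2 := ltn_ord y2.
  move/(half_inj (addm_lt hx h1) (addm_lt hx h2)).
  by move/(addm_injr hx h1 h2) => /ord_inj.
split.
- exact: rowi.
- move=> y x1 x2 e; apply: (rowi y).
  by apply: val_inj; move/(congr1 val): e => /=; rewrite addmC [addm d x2 _]addmC.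
- move=> x y; apply: val_inj => /=; exact: half_tau.
Qed.
End Odd.

Section Assemble.
Variables (d r : nat) (a : {perm 'I_(d * r)}) (ha : cycle_structure_uniform d a)
  (x0 : 'I_(d * r)).

Lemma suff_lemma (N : 'I_d -> 'I_d -> 'I_d) : base_ok N -> in_Par12 a a a.
Proof.
case=> Nr Nc Nt.
pose S (x y : 'I_#|porbits a|) : 'I_#|porbits a| :=
  Ordinal (addm_lt (ltn_ord x) (ltn_ord y)).
have Sr x : injective (S x).
  move=> y1 y2 /(congr1 val) /=; move/(addm_injr (ltn_ord x) (ltn_ord y1) (ltn_ord y2)).
  exact: ord_inj.
have SC x y : S x y = S y x by apply: val_inj; rewrite /= addmC.
pose e := @ce _ d a x0. pose ei := @ceinv _ d a ha x0.
have eK : cancel e ei := ceK ha x0.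
have eiK : cancel ei e := ceinvK ha x0.
have E w : ei (a w) = (osucc (ei w).1, (ei w).2).
  by apply: (can_inj eK); rewrite eiK -{1}(eiK w) /e ce_succ.
exists (fun u v => e (N (ei u).1 (ei v).1, S (ei u).2 (ei v).2)); split.
- apply: latin_of_inj.
  + move=> u v1 v2 /(can_inj eK)/eqP; rewrite xpair_eqE => /andP[/eqP/(Nr _) e1 /eqP/(Sr _) e2]; apply: (can_inj eiK).
    by rewrite [ei v1]surjective_pairing [ei v2]surjective_pairing e1 e2.
  + move=> v u1 u2 /(can_inj eK)/eqP; rewrite xpair_eqE SC [S (ei u2).2 _]SC => /andP[/eqP/(Nc _) e1 /eqP/(Sr _) e2].
    apply: (can_inj eiK).
    by rewrite [ei u1]surjective_pairing [ei u2]surjective_pairing e1 e2.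
- move=> u v; rewrite !E /= Nt SC.
  by rewrite /e (ce_succ ha).
Qed.

Lemma nec_lemma : in_Par12 a a a -> d %% 4 <> 2.
Proof.
move=> [L [_ HL]] h4.
have HL2 j x y : L (iter (2 * j) a x) (iter (2 * j) a y) = iter (2 * j) a (L x y).
  elim: j x y => [|j IH] x y; first by rewrite muln0.
  have -> : 2 * j.+1 = (2 * j).+2 by rewrite mulnS.
  by rewrite /= !HL IH.
pose q := d %/ 4.
have Hm x y : L (iter (2 * q).+1 a y) (iter (2 * q).+1 a x) = iter (2 * q).+1 a (L x y).
  by rewrite /= HL HL2.
have dd : (2 * q).+1 + (2 * q).+1 = d by rewrite /q; lia.
pose y := iter (2 * q).+1 a x0.
have := Hm x0 y; rewrite /y -iterD dd (iter_d ha) => Ez.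
have := @iter_inj _ _ _ ha (L x0 y) 0 (2 * q).+1.
rewrite -Ez /= => /(_ (d_gt0 ha x0)) H.
have : (2 * q).+1 < d by lia.
by move/H => /(_ erefl).
Qed.
End Assemble.

Unset Implicit Arguments.

Theorem corollary4p12 (d r : nat) (hd : 0 < d) (hr : 0 < r)
    (a : {perm 'I_(d * r)}) (ha : cycle_structure_uniform d a) :
  in_Par12 a a a <-> d %% 4 <> 2.
Proof.
have x0 : 'I_(d * r) by exists 0; rewrite muln_gt0 hd hr.
split; first exact: (@nec_lemma d r a ha x0).
move=> h4.
have [N HN] : exists N : 'I_d -> 'I_d -> 'I_d, base_ok N.
  case: (boolP (odd d)) => od; first by exists (Nodd od); exact: Nodd_ok.
  have hk : 0 < d %/ 4 by lia.
  have dk : 4 * (d %/ 4) = d by lia.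
  have : exists N : 'I_(4 * (d %/ 4)) -> 'I_(4 * (d %/ 4)) -> 'I_(4 * (d %/ 4)), base_ok N.
    by exists (N4 hk); exact: N4_ok.
  by rewrite dk.
exact: (@suff_lemma d r a ha x0 N HN).
Qed.
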